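(* Let $n\ge2$, let $\mathbb{A}=(A_{ij})_{i,j=1}^n$ be an operator matrix as in the context, and assume that for all $i\ne j$ there are constants $c_{ij},d_{ij}\ge0$ with $\|A_{ij}x_j\|_{X_i}\le c_{ij}\|A_{jj}x_j\|_{X_j}+d_{ij}\|x_j\|_{X_j}$ for all $x_j\in\mathcal{D}(A_{jj})$ and $\sum_{i=1,i\ne j}^nc_{ij}<1$ for every $j$. Then $\sigma(\mathbb{A})\subset C(\mathbb{A})$ and $\sigma(\mathbb{A})\subset\bigcap_{k=1}^nS^*_k(\mathbb{A})$.
   Context: Let $X_1,\ldots,X_n$ be complex Banach spaces and $X=X_1\times\cdots\times X_n$ with norm $\|x\|=\sum_i\|x_i\|_{X_i}$. For $i,j$, $A_{ij}:\mathcal{D}(A_{ij})\subset X_j\to X_i$ are linear, $A_{ii}$ closed, and for $i\ne j$ $\mathcal{D}(A_{jj})\subset\mathcal{D}(A_{ij})$. $\mathbb{A}=(A_{ij})$ acts on $\mathcal{D}(A_{11})\times\cdots\times\mathcal{D}(A_{nn})$ by $(\mathbb{A}x)_i=\sum_jA_{ij}x_j$. $\sigma(S)$ is the set of $\lambda$ for which $\lambda-S$ is not bijective from $\mathcal{D}(S)$ with bounded inverse. For $i\ne j$, the Cassini oval $C_{ij}(\mathbb{A}):=\sigma(A_{ii})\cup\sigma(A_{jj})\cup\widetilde C_{ij}(\mathbb{A})$, where $\widetilde C_{ij}(\mathbb{A})$ is the set of $\lambda\notin\sigma(A_{ii})\cup\sigma(A_{jj})$ with $\big(\sum_{l\ne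 i}\|A_{li}(\lambda-A_{ii})^{-1}\|\big)\big(\sum_{l\ne j}\|A_{lj}(\lambda-A_{jj})^{-1}\|\big)\ge1$, and $C(\mathbb{A}):=\bigcup_{1\le i<j\le n}C_{ij}(\mathbb{A})$. For $j\ne k$ and $\lambda\notin\sigma(A_{kk})\cup\sigma(A_{jj})$, $\mathcal{R}^*_{kj}(\lambda):=\sum_{i=1,i\ne k}^n\big(\|A_{ik}(\lambda-A_{kk})^{-1}A_{kj}(\lambda-A_{jj})^{-1}\|+\|(1-\delta_{ij})A_{ij}(\lambda-A_{jj})^{-1}\|\big)$; $S^*_{kj}(\mathbb{A}):=\sigma(A_{kk})\cup\sigma(A_{jj})\cup\{\lambda\notin\sigma(A_{kk})\cup\sigma(A_{jj}):\mathcal{R}^*_{kj}(\lambda)\ge1\}$ and $S^*_k(\mathbb{A}):=\bigcup_{j\ne k}S^*_{kj}(\mathbb{A})$. *)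

(* Defs.v *)
From HB Require Import structures.
From mathcomp Require Import all_boot all_order all_algebra.
From mathcomp Require Import all_classical all_reals all_analysis.
From mathcomp Require Import complex.

Unset Strict Implicit.
Unset Printing Implicit Defensive.

Import Order.TTheory GRing.Theory Num.Theory.
Import numFieldNormedType.Exports.
Local Open Scope classical_set_scope.
Local Open Scope ring_scope.

Section Defs.
Variable R : realType.
Local Notation C := R[i].

(* real-valued norm of a vector of a normed space over C
   (the library norm is C-valued, nonnegative, hence real) *)
Definition rnorm {V : normedModType C} (x : V) : R := complex.Re `|x|.

Definition opnorm {U V : normedModType C} (T : U -> V) : \bar R :=
  ereal_sup [set (rnorm (T y))%:E | y in [set y : U | rnorm y <= 1]].

Definition inverse_bdd {V W : Type} (nV : V -> R) (nW : W -> R)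
  (D : set V) (L : V -> W) (Rinv : W -> V) : Prop :=
  [/\ forall y, D (Rinv y),
      forall y, L (Rinv y) = y,
      forall x, D x -> Rinv (L x) = x
    & exists M : R, forall y, nV (Rinv y) <= M * nW y].

Definition bij_bdd_inv {V W : Type} (nV : V -> R) (nW : W -> R)
  (D : set V) (L : V -> W) : Prop := exists Rinv, inverse_bdd nV nW D L Rinv.

Definition spectrum {V : normedModType C} (D : set V) (S : V -> V) : set C :=
  [set l | ~ bij_bdd_inv rnorm rnorm D (fun x => l *: x - S x)].

(* the resolvent (l - S)^{-1} (an arbitrary map if l is in the spectrum) *)
Definition resolvent {V : normedModType C} (D : set V) (S : V -> V) (l : C)
  : V -> V :=
  match pselect (exists Rinv,
           inverse_bdd rnorm rnorm D (fun x => l *: x - S x) Rinv) with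
  | left h => projT1 (cid h)
  | right _ => fun _ => 0
  end.

Definition linear_on {U V : lmodType C} (D : set U) (T : U -> V) : Prop :=
  [/\ D 0, forall x y, D x -> D y -> D (x + y),
      forall (a : C) x, D x -> D (a *: x),
      forall x y, D x -> D y -> T (x + y) = T x + T y
    & forall (a : C) x, D x -> T (a *: x) = a *: T x].

Definition closed_op {V W : normedModType C} (D : set V) (T : V -> W) : Prop :=
  closed [set p : V * W | D p.1 /\ p.2 = T p.1].

Variables (n : nat) (X : 'I_n -> normedModType C)
  (A : forall i j : 'I_n, X j -> X i) (Dom : forall i j : 'I_n, set (X j)).

Definition prodnorm (x : forall i, X i) : R := \sum_(i < n) rnorm (x i).

Definition matdom : set (forall i, X i) := [set x : forall i, X i | forall j, Dom j j (x j)].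

Definition shifted_mat (l : C) (x : forall i, X i) : forall i, X i :=
  fun i => l *: x i - \sum_(j < n) A i j (x j).

Definition spec_mat : set C :=
  [set l | ~ bij_bdd_inv prodnorm prodnorm matdom (shifted_mat l)].

Definition specd (i : 'I_n) : set C := spectrum (Dom i i) (A i i).
Definition res (i : 'I_n) (l : C) : X i -> X i := resolvent (Dom i i) (A i i) l.

Definition colsum (i : 'I_n) (l : C) : \bar R :=
  (\sum_(m < n | m != i) opnorm (A m i \o res i l))%E.

Definition cassini_tilde (i j : 'I_n) : set C :=
  [set l | ~ specd i l /\ ~ specd j l /\ (1 <= colsum i l * colsum j l)%E].

Definition cassini (i j : 'I_n) : set C :=
  specd i `|` specd j `|` cassini_tilde i j.

Definition cassini_union : set C :=
  [set l | exists i j : 'I_n, (i < j)%N /\ cassini i j l].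

Definition Rstar (k j : 'I_n) (l : C) : \bar R :=
  (\sum_(i < n | i != k)
     (opnorm (A i k \o res k l \o A k j \o res j l)
      + (if i == j then 0 else opnorm (A i j \o res j l))))%E.

Definition Sstar_kj (k j : 'I_n) : set C :=
  specd k `|` specd j `|`
  [set l | ~ specd k l /\ ~ specd j l /\ (1 <= Rstar k j l)%E].

Definition Sstar (k : 'I_n) : set C :=
  [set l | exists j : 'I_n, j != k /\ Sstar_kj k j l].

End Defs.

Arguments rnorm {R V}.
Arguments opnorm {R U V}.
Arguments linear_on {R U V}.
Arguments closed_op {R V W}.
Arguments spec_mat {R n X}.
Arguments cassini_union {R n X}.
Arguments Sstar {R n X}.

(* Main.v *)
Require Import Defs.
From HB Require Import structures.
From mathcomp Require Import all_boot all_order all_algebra.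
From mathcomp Require Import all_classical all_reals all_analysis.
From mathcomp Require Import complex.
From mathcomp Require Import ring lra.
Import Order.TTheory GRing.Theory Num.Theory.
Import numFieldNormedType.Exports.
Local Open Scope classical_set_scope.
Local Open Scope ring_scope.
Section S.
Variable R : realType.
Local Notation C := R[i].
Local Notation "x %:RC" := (real_complex R x) (at level 2, format "x %:RC").
Lemma posC (a : C) : 0 <= a -> a = (complex.Re a)%:RC.
Proof. case: a => x y; rewrite lecE /= => /andP[/eqP -> _]. by []. Qed.
Section V. Context {V : normedModType C}.
Lemma normE (x : V) : `|x| = (rnorm x)%:RC.
Proof. exact/posC/normr_ge0. Qed.
Lemma rnorm_ge0 (x : V) : 0 <= rnorm x.
Proof. by have := normr_ge0 x; rewrite normE lecE /= => /andP[]. Qed.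
Lemma rnormD (x y : V) : rnorm (x + y) <= rnorm x + rnorm y.
Proof. by rewrite -lecR rmorphD /= -!normE ler_normD. Qed.
Lemma rnorm0 : rnorm (0 : V) = 0.
Proof. by rewrite /rnorm normr0. Qed.
Lemma rnormN (x : V) : rnorm (- x) = rnorm x.
Proof. by rewrite /rnorm normrN. Qed.
Lemma rnormB (x y : V) : rnorm (x - y) = rnorm (y - x).
Proof. by rewrite /rnorm distrC. Qed.
Lemma rnorm_eq0 (x : V) : rnorm x = 0 -> x = 0.
Proof. by move=> h; apply: normr0_eq0; rewrite normE h. Qed.
Lemma rnormZ (a : C) (x : V) : rnorm (a *: x) = complex.Re `|a| * rnorm x.
Proof. by rewrite /rnorm normrZ normE [`|a|]posC // -rmorphM. Qed.
Lemma rnormZR (a : R) (x : V) : rnorm (a%:RC *: x) = `|a| * rnorm x.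
Proof. by rewrite rnormZ normc_def /= expr0n /= addr0 sqrtr_sqr. Qed.
Lemma rnorm_sum (I : Type) (r : seq I) (P : pred I) (F : I -> V) :
  rnorm (\sum_(i <- r | P i) F i) <= \sum_(i <- r | P i) rnorm (F i).
Proof.
apply: (big_ind2 (fun a b => rnorm a <= b)); first by rewrite rnorm0.
  by move=> a1 a2 b1 b2 h1 h2; apply: le_trans (rnormD _ _) (lerD h1 h2).
by [].
Qed.
End V.

Lemma geo_cvg (V : completeNormedModType C) (y : nat -> V) (B q : R) :
  0 <= q -> q < 1 -> (forall m, rnorm (y m.+1 - y m) <= B * q ^+ m) -> cvgn y.
Proof.
move=> q0 q1 hy.
have B0 : 0 <= B by have := hy 0%N; rewrite expr0 mulr1; apply: le_trans; exact: rnorm_ge0.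
have q1' : 0 < 1 - q by rewrite subr_gt0.
have tail N k : rnorm (y (N + k)%N - y N) <= B * q ^+ N * (1 - q ^+ k) / (1 - q).
  elim: k => [|k ih]; first by rewrite addn0 subrr rnorm0 expr0 subrr mulr0 mul0r.
  rewrite addnS.
  have -> : y (N + k).+1 - y N = (y (N + k).+1 - y (N + k)%N) + (y (N + k)%N - y N).
    by rewrite addrA subrK.
  apply: (le_trans (rnormD _ _)).
  apply: (le_trans (lerD (hy _) ih)).
  rewrite le_eqVlt; apply/orP; left; apply/eqP.
  rewrite exprD exprS; field; by rewrite lt0r_neq0.
have tail2 N k : rnorm (y (N + k)%N - y N) <= B * q ^+ N / (1 - q).
  apply: le_trans (tail N k) _; rewrite ler_pM2r ?invr_gt0 //.
  rewrite -[leRHS]mulr1 ler_wpM2l ?mulr_ge0 ?exprn_ge0 //.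
  by rewrite lerBlDr lerDl exprn_ge0.
apply/cauchy_cvgP; apply: cauchy_exP => e e0.
have ee := @posC e (ltW e0).
set eps := complex.Re e in ee.
have eps0 : 0 < eps by move: e0; rewrite ee ltcR.
have geo := @cvg_geometric R 1 q.
have hg : geometric 1 q @ \oo --> 0 by apply: geo; rewrite ger0_norm.
have := cvgr0_norm_lt _ hg (eps * (1 - q) / (B + 1)).
case; first by rewrite divr_gt0 ?mulr_gt0 // ltr_wpDl.
move=> N _ HN.
have hN := HN N (leqnn N).
rewrite /geometric /= mul1r ger0_norm ?exprn_ge0 // in hN.
exists (y N); exists N => // m /= Nm.
rewrite -ball_normE /= normE rnormB -(subnKC Nm) ee ltcR.
apply: le_lt_trans (tail2 _ _) _.
rewrite ltr_pdivrMr //.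
apply: (le_lt_trans (y := (B + 1) * q ^+ N)).
  by rewrite ler_wpM2r ?exprn_ge0 // lerDl.
by rewrite mulrC -ltr_pdivlMr ?ltr_wpDl.
Qed.


Lemma zmodAC (G : zmodType) (a b c d : G) : a - b - (c - d) = a - c - (b - d).
Proof. by rewrite !opprB !addrA addrAC [in RHS]addrAC (addrAC a). Qed.

Lemma zmodAC2 (G : zmodType) (a b e d : G) : a - (b + e - d) = a - b + (d - e).
Proof. by rewrite opprB opprD !addrA; congr (_ + _); exact: addrAC. Qed.

Section Additive.
Context {U V : zmodType} (f : U -> V) (fD : forall u v, f (u + v) = f u + f v).
Lemma fadd0 : f 0 = 0.
Proof. by apply: (addrI (f 0)); rewrite -fD !addr0. Qed.
Lemma faddN u : f (- u) = - f u.
Proof. by apply: (addrI (f u)); rewrite -fD !subrr fadd0. Qed.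
Lemma faddB u v : f (u - v) = f u - f v.
Proof. by rewrite fD faddN. Qed.
Lemma fadd_sum (I : Type) (r : seq I) (P : pred I) (F : I -> U) :
  f (\sum_(i <- r | P i) F i) = \sum_(i <- r | P i) f (F i).
Proof.
apply: (big_ind2 (fun a b => f a = b)); first exact: fadd0.
  by move=> a1 a2 b1 b2 <- <-; rewrite fD.
by [].
Qed.
End Additive.

Section Core.
Context {n : nat} {X : 'I_n -> completeNormedModType C}.
Definition IK (K : forall i j : 'I_n, X j -> X i) (y : forall i, X i) : forall i, X i :=
  fun i => y i - \sum_(j < n) K i j (y j).
Definition KV (K : forall i j : 'I_n, X j -> X i) (y : forall i, X i) : forall i, X i :=
  fun i => \sum_(j < n) K i j (y j).
Definition Wn (w : 'I_n -> R) (y : forall i, X i) : R := \sum_(i < n) w i * rnorm (y i).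
Definition goodK (K : forall i j : 'I_n, X j -> X i) :=
  (forall z, exists Y, forall i, IK K Y i = z i) /\
  exists M, forall Y, \sum_(i < n) rnorm (Y i) <= M * \sum_(i < n) rnorm (IK K Y i).

Variables (K : forall i j : 'I_n, X j -> X i) (k : 'I_n -> 'I_n -> R) (w : 'I_n -> R) (q : R).
Hypotheses (KD : forall i j u v, K i j (u + v) = K i j u + K i j v)
  (Kb : forall i j u, rnorm (K i j u) <= k i j * rnorm u)
  (k0 : forall i j, 0 <= k i j) (w0 : forall i, 0 < w i) (q0 : 0 <= q) (q1 : q < 1)
  (col : forall j, \sum_(i < n) w i * k i j <= q * w j).

Lemma Wn_ge0 y : 0 <= Wn w y.
Proof. by apply: sumr_ge0 => i _; rewrite mulr_ge0 ?rnorm_ge0 // ltW. Qed.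

Lemma Kstep v : Wn w (KV K v) <= q * Wn w v.
Proof.
rewrite /Wn /KV.
apply: (le_trans (y := \sum_(i < n) \sum_(j < n) w i * (k i j * rnorm (v j)))).
  apply: ler_sum => i _; rewrite -mulr_sumr ler_wpM2l ?(ltW (w0 _)) //.
  apply: le_trans (rnorm_sum _ _ _ _) _; apply: ler_sum => j _; exact: Kb.
rewrite exchange_big /= mulr_sumr; apply: ler_sum => j _.
rewrite (eq_bigr (fun i => (w i * k i j) * rnorm (v j))); last by move=> i _; rewrite mulrA.
by rewrite -mulr_suml mulrA ler_wpM2r ?rnorm_ge0.
Qed.

Lemma core_lb y : (1 - q) * Wn w y <= Wn w (IK K y).
Proof.
have h : Wn w y <= Wn w (IK K y) + Wn w (KV K y).
  rewrite /Wn -big_split /=; apply: ler_sum => i _; rewrite -mulrDr ler_wpM2l ?(ltW (w0 _)) //.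
  have e : y i = IK K y i + KV K y i by rewrite /IK /KV subrK.
  by rewrite {1}e; exact: rnormD.
have := Kstep y; move: h; lra.
Qed.


Lemma w_le_Wn y i : w i * rnorm (y i) <= Wn w y.
Proof.
rewrite /Wn (bigD1 i) //= lerDl; apply: sumr_ge0 => j _.
by rewrite mulr_ge0 ?rnorm_ge0 // ltW.
Qed.

Lemma KVB u v i : KV K u i - KV K v i = KV K (fun j => u j - v j) i.
Proof.
rewrite /KV -sumrB; apply: eq_bigr => j _; by rewrite (faddB _ (KD i j)).
Qed.

Lemma core_surj z : exists Y, forall i, IK K Y i = z i.
Proof.
pose F (v : forall i, X i) : forall i, X i := fun i => z i + KV K v i.
pose y m := iter m F z.
pose d m : forall i, X i := fun i => y m.+1 i - y m i.
have dS m i : d m.+1 i = KV K (d m) i.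
  by rewrite /d /y !iterS /F -KVB opprD addrACA subrr add0r.
have dW m : Wn w (d m) <= q ^+ m * Wn w (d 0%N).
  elim: m => [|p ih]; first by rewrite expr0 mul1r.
  have -> : d p.+1 = KV K (d p) by apply: functional_extensionality_dep => i; exact: dS.
  apply: le_trans (Kstep _) _.
  by rewrite exprS -mulrA ler_wpM2l.
have cv i : cvgn (fun m => y m i).
  apply: (@geo_cvg _ _ (Wn w (d 0%N) / w i) q) => // m.
  have := w_le_Wn (d m) i; rewrite -ler_pdivlMl // => h.
  apply: le_trans h _.
  rewrite mulrC (mulrC (Wn _ _ / _)) mulrA; apply: ler_wpM2r; [by rewrite invr_ge0 ltW | exact: dW].
pose Y i := lim ((fun m => y m i) @ \oo).
exists Y => i.
set r := IK K Y i - z i.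
suff : rnorm r <= 0.
  move=> h; have r0 : rnorm r = 0 by apply/le_anti; rewrite h rnorm_ge0.
  by apply/eqP; rewrite -subr_eq0; apply/eqP; apply: rnorm_eq0.
rewrite leNgt; apply/negP => rpos.
pose S := \sum_(j < n) k i j.
have S0 : 0 <= S by apply: sumr_ge0.
pose del := rnorm r / (2 + S).
have del0 : 0 < del by rewrite divr_gt0 // ltr_wpDr.
have hnear : \forall m \near \oo, forall j, `|Y j - y m j| < del%:RC.
  apply: filter_forall => j; apply: cvgr_dist_lt; first exact: cv.
  by rewrite ltcR.
case: hnear => N _ HN.
have h1 := HN N (leqnn N).
have h2 := HN N.+1 (leqnSn N).
have er : r = (Y i - y N.+1 i) + KV K (fun j => y N j - Y j) i.
  rewrite -KVB /r /IK /y iterS /F -/(y N) /KV.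
  by rewrite opprD !addrA subrK addrAC.
have : rnorm r <= del + S * del.
  rewrite {1}er; apply: le_trans (rnormD _ _) _; apply: lerD.
    by move: (h2 i); rewrite normE ltcR => /ltW.
  rewrite /KV; apply: le_trans (rnorm_sum _ _ _ _) _.
  rewrite /S mulr_suml; apply: ler_sum => j _.
  apply: le_trans (Kb _ _ _) _; rewrite ler_wpM2l // rnormB.
  by move: (h1 j); rewrite normE ltcR => /ltW.
have : del * (2 + S) = rnorm r by rewrite /del mulrVK // unitfE gt_eqF // ltr_wpDr.
have : 0 < del * S + del by rewrite ltr_wpDl // mulr_ge0 // ltW.
nra.
Qed.


Lemma sum_le_Wn y : \sum_(i < n) rnorm (y i) <= (\sum_(i < n) (w i)^-1) * Wn w y.
Proof.
rewrite mulr_suml; apply: ler_sum => i _.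
by rewrite -ler_pdivrMl ?invr_gt0 // invrK; exact: w_le_Wn.
Qed.

Lemma Wn_le_sum y : Wn w y <= (\sum_(i < n) w i) * \sum_(i < n) rnorm (y i).
Proof.
rewrite mulr_sumr; apply: ler_sum => i _; apply: ler_wpM2r; first exact: rnorm_ge0.
by rewrite (bigD1 i) //= lerDl sumr_ge0 // => j _; apply: ltW.
Qed.

Lemma core_good : goodK K.
Proof.
split; first exact: core_surj.
exists ((\sum_(i < n) (w i)^-1) * (\sum_(i < n) w i) / (1 - q)) => Y.
have q1' : 0 < 1 - q by rewrite subr_gt0.
have Wi0 : 0 <= \sum_(i < n) (w i)^-1 by apply: sumr_ge0 => i _; rewrite invr_ge0 ltW.
apply: le_trans (sum_le_Wn Y) _.
rewrite -!mulrA; apply: ler_wpM2l => //.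
rewrite mulrCA ler_pdivlMl //.
apply: le_trans (core_lb Y) _; exact: Wn_le_sum.
Qed.
End Core.




Lemma fin_sup (I : finType) (P : pred I) (f : I -> R) (b : R) :
  (forall i, P i -> f i < b) -> exists2 t, t < b & forall i, P i -> f i <= t.
Proof.
move=> h; exists (\big[Num.max/(b - 1)]_(i | P i) f i).
  apply: (big_ind (fun x => x < b)); first by rewrite gtrBl ltr01.
    by move=> x y hx hy; rewrite gt_max hx hy.
  exact: h.
move=> i Pi; rewrite (bigD1 i) //=; by rewrite le_max lexx.
Qed.

Lemma argmax (I : finType) (i0 : I) (f : I -> R) : exists p, forall j, f j <= f p.
Proof.
exists (Order.arg_max i0 xpredT f).
by case: (@arg_maxP _ _ _ i0 xpredT f) => // p _ hp j; exact: hp.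
Qed.

Lemma opnorm_bdd (U V : normedModType C) (T : U -> V) (B : R) :
  0 <= B -> (forall (a : C) u, T (a *: u) = a *: T u) ->
  (forall u, rnorm (T u) <= B * rnorm u) ->
  [/\ opnorm T = (fine (opnorm T))%:E, 0 <= fine (opnorm T)
    & forall u, rnorm (T u) <= fine (opnorm T) * rnorm u].
Proof.
move=> B0 TZ Tb.
have T0 : T 0 = 0 by rewrite -(scale0r (0 : U)) TZ scale0r.
have ub : (opnorm T <= B%:E)%E.
  apply: ge_ereal_sup => _ [y /= y1 <-]; rewrite lee_fin.
  by apply: le_trans (Tb y) _; rewrite -[leRHS]mulr1 ler_wpM2l.
have lb : (0 <= opnorm T)%E.
  apply: ereal_sup_ubound; exists 0; rewrite /= ?rnorm0 //.
  by rewrite T0 rnorm0.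
have fin : opnorm T = (fine (opnorm T))%:E.
  by rewrite fineK // ge0_fin_numE // (le_lt_trans ub) // ltry.
have f0 : 0 <= fine (opnorm T) by rewrite -lee_fin -fin.
split => // u.
have [u0|upos] := eqVneq (rnorm u) 0.
  by rewrite (rnorm_eq0 _ u0) T0 !rnorm0 mulr0.
have s0 : 0 < rnorm u by rewrite lt0r upos rnorm_ge0.
pose u' := ((rnorm u)^-1)%:RC *: u.
have u'1 : rnorm u' = 1 by rewrite rnormZR ger0_norm ?invr_ge0 ?rnorm_ge0 // mulVf.
have : ((rnorm (T u'))%:E <= opnorm T)%E by apply: ereal_sup_ubound; exists u' => //=; rewrite u'1.
rewrite fin lee_fin /u' TZ rnormZR ger0_norm ?invr_ge0 ?rnorm_ge0 //.
by rewrite /= ler_pdivrMl // mulrC.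
Qed.

Section Res.
Context {V : normedModType C} (D : set V) (S : V -> V) (l : C).
Hypothesis (lin : linear_on D S) (nsp : ~ spectrum R D S l).
Let L x := l *: x - S x.
Lemma res_spec : inverse_bdd R rnorm rnorm D L (resolvent R D S l).
Proof.
rewrite /resolvent; case: pselect => [h|h]; first exact: (projT2 (cid h)).
by exfalso; apply: nsp => -[Ri hb]; apply: h; exists Ri.
Qed.
Let Ri := resolvent R D S l.
Lemma resD y : D (Ri y). Proof. by case: res_spec. Qed.
Lemma resK y : l *: Ri y - S (Ri y) = y. Proof. by case: res_spec => _ h _ _; exact: h. Qed.
Lemma resKV x : D x -> Ri (l *: x - S x) = x. Proof. by case: res_spec => _ _ h _; exact: h. Qed.
Lemma resB : exists M, 0 <= M /\ forall y, rnorm (Ri y) <= M * rnorm y.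
Proof.
case: res_spec => _ _ _ [M hM]; exists `|M|; split => // y.
apply: le_trans (hM y) _; apply: ler_wpM2r; [exact: rnorm_ge0 | exact: ler_norm].
Qed.
Lemma resAdd u v : Ri (u + v) = Ri u + Ri v.
Proof.
case: lin => _ DD _ SD _.
have DU := resD u; have DV := resD v.
have e : l *: (Ri u + Ri v) - S (Ri u + Ri v) = u + v.
  by rewrite SD // scalerDr opprD addrACA !resK.
by rewrite -e resKV //; apply: DD.
Qed.
Lemma resZ (a : C) u : Ri (a *: u) = a *: Ri u.
Proof.
case: lin => _ _ DZ _ SZ.
have DU := resD u.
have e : l *: (a *: Ri u) - S (a *: Ri u) = a *: u.
  by rewrite SZ // scalerA mulrC -scalerA -scalerBr resK.
by rewrite -e resKV //; apply: DZ.
Qed.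
End Res.

Lemma core_good' {n : nat} {X : 'I_n -> completeNormedModType C}
  (K : forall i j : 'I_n, X j -> X i) (k : 'I_n -> 'I_n -> R) (w : 'I_n -> R) :
  (forall i j u v, K i j (u + v) = K i j u + K i j v) ->
  (forall i j u, rnorm (K i j u) <= k i j * rnorm u) ->
  (forall i j, 0 <= k i j) -> (forall i, 0 < w i) ->
  (forall j, \sum_(i < n) w i * k i j < w j) -> goodK K.
Proof.
move=> KD Kb k0 w0 col.
have hlt : forall j, xpredT j -> (\sum_(i < n) w i * k i j) / w j < 1.
  by move=> j _; rewrite ltr_pdivrMr // mul1r.
have [q0 hq0 hq] := fin_sup _ _ _ _ hlt.
apply: (@core_good _ _ K k w (Num.max q0 0)) => //.
- by rewrite le_max lexx orbT.
- by rewrite gt_max hq0 ltr01.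
- move=> j; have := hq j isT; rewrite ler_pdivrMr // => h.
  apply: le_trans h _; apply: ler_wpM2r; [exact: ltW | by rewrite le_max lexx].
Qed.

Lemma Reabs_ge0 (a : C) : 0 <= complex.Re `|a|.
Proof. by have := normr_ge0 a; rewrite lecE => /andP[]. Qed.

Section Main.
Context {n : nat} {X : 'I_n -> completeNormedModType C}
  (A : forall i j : 'I_n, X j -> X i) (Dom : forall i j : 'I_n, set (X j))
  (c d : 'I_n -> 'I_n -> R) (l : C).
Hypotheses (lin : forall i j, linear_on (Dom i j) (A i j))
  (dsub : forall i j, i != j -> Dom j j `<=` Dom i j)
  (relb : forall i j, i != j ->
        [/\ 0 <= c i j, 0 <= d i j &
          forall x, Dom j j x ->
            rnorm (A i j x) <= c i j * rnorm (A j j x) + d i j * rnorm x])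
  (nsp : forall i, ~ specd _ _ _ A Dom i l).

Let rs j : X j -> X j := res _ _ _ A Dom j l.
Let nsp' j : ~ spectrum R (Dom j j) (A j j) l := nsp j.
Let rsD j y : Dom j j (rs j y) := resD _ _ _ (nsp' j) y.
Let rsK j y : l *: rs j y - A j j (rs j y) = y := resK _ _ _ (nsp' j) y.
Let rsKV j x : Dom j j x -> rs j (l *: x - A j j x) = x := resKV _ _ _ (nsp' j) x.
Let rsAdd j u v : rs j (u + v) = rs j u + rs j v := resAdd _ _ _ (lin j j) (nsp' j) u v.
Let rsZ j a u : rs j (a *: u) = a *: rs j u := resZ _ _ _ (lin j j) (nsp' j) a u.

Definition KK : forall i j : 'I_n, X j -> X i :=
  fun i j u => if i == j then 0 else A i j (rs j u).

Lemma KK_diag i u : KK i i u = 0.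
Proof. by rewrite /KK eqxx. Qed.

Lemma KK_off i j : i != j -> KK i j = A i j \o rs j.
Proof. by move=> ij; apply: boolp.funext => u; rewrite /KK (negbTE ij). Qed.

Lemma KKD i j u v : KK i j (u + v) = KK i j u + KK i j v.
Proof.
rewrite /KK; case: eqP => [_|/eqP ij]; first by rewrite addr0.
case: (lin i j) => _ _ _ AD _.
by rewrite rsAdd AD //; apply: (dsub _ _ ij _ (rsD _ _)).
Qed.

Lemma KKZ i j a u : KK i j (a *: u) = a *: KK i j u.
Proof.
rewrite /KK; case: eqP => [_|/eqP ij]; first by rewrite scaler0.
case: (lin i j) => _ _ _ _ AZ.
by rewrite rsZ AZ //; apply: (dsub _ _ ij _ (rsD _ _)).
Qed.

Lemma KK_bdd i j : exists B, 0 <= B /\ forall u, rnorm (KK i j u) <= B * rnorm u.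
Proof.
rewrite /KK; case: eqP => [_|/eqP ij].
  by exists 0; split => // u; rewrite rnorm0 mul0r.
have [M [M0 hM]] := resB _ _ _ (nsp' j).
have [c0 d0 hr] := relb _ _ ij.
exists (c i j * (complex.Re `|l| * M + 1) + d i j * M); split.
  by rewrite addr_ge0 ?mulr_ge0 ?addr_ge0 ?mulr_ge0 // Reabs_ge0.
move=> u; apply: le_trans (hr _ (rsD _ _)) _.
have eA : A j j (rs j u) = l *: rs j u - u.
  set r := rs j u; have h := rsK j u; rewrite -/r in h.
  by rewrite -h opprB addrC subrK.
rewrite eA mulrDl; apply: lerD; last first.
  by rewrite -mulrA ler_wpM2l //; exact: hM.
rewrite -mulrA ler_wpM2l // mulrDl mul1r.
apply: le_trans (rnormD _ _) _; rewrite rnormN lerD2r rnormZ -mulrA ler_wpM2l //.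
  by rewrite Reabs_ge0.
exact: hM.
Qed.

Definition kk i j : R := fine (opnorm (KK i j)).

Lemma kk_spec i j :
  [/\ opnorm (KK i j) = (kk i j)%:E, 0 <= kk i j
    & forall u, rnorm (KK i j u) <= kk i j * rnorm u].
Proof.
have [B [B0 hB]] := KK_bdd i j.
by case: (opnorm_bdd _ _ _ _ B0 (KKZ i j) hB).
Qed.


Lemma shift_res Y i : shifted_mat _ _ _ A l (fun j => rs j (Y j)) i = IK KK Y i.
Proof.
rewrite /shifted_mat /IK (bigD1 i) //= [\sum_(j < n) KK i j (Y j)](bigD1 i) //= KK_diag add0r.
rewrite opprD addrA rsK; congr (_ - _); apply: eq_bigr => j ji.
by rewrite /KK eq_sym (negbTE ji).
Qed.

Lemma IKB Y Z i : IK KK (fun j => Y j - Z j) i = IK KK Y i - IK KK Z i.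
Proof.
rewrite /IK (eq_bigr (fun j => KK i j (Y j) - KK i j (Z j))); last first.
  by move=> j _; rewrite (faddB _ (KKD i j)).
by rewrite sumrB zmodAC.
Qed.

Lemma final : goodK KK -> ~ spec_mat A Dom l.
Proof.
move=> [Ssol [M hM]]; apply.
pose G z := projT1 (cid (Ssol z)).
have hG z i : IK KK (G z) i = z i := projT2 (cid (Ssol z)) i.
pose Mj j := projT1 (cid (resB _ _ _ (nsp' j))).
have hMj j : 0 <= Mj j /\ forall y, rnorm (rs j y) <= Mj j * rnorm y := projT2 (cid (resB _ _ _ (nsp' j))).
exists (fun z j => rs j (G z j)); split.
- by move=> z j; exact: rsD.
- move=> z; apply: boolp.functional_extensionality_dep => i; by rewrite shift_res hG.
- move=> x xd.
  set y := shifted_mat _ _ _ A l x.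
  pose Yx j := l *: x j - A j j (x j).
  have ex : (fun j => rs j (Yx j)) = x.
    by apply: boolp.functional_extensionality_dep => j; rewrite rsKV //; exact: xd.
  have IKy i : IK KK Yx i = y i by rewrite -shift_res ex.
  have diff i : IK KK (fun j => G y j - Yx j) i = 0 by rewrite IKB hG IKy subrr.
  have := hM (fun j => G y j - Yx j).
  rewrite [\sum_(i < n) rnorm (IK KK _ i)](eq_bigr (fun=> 0)); last by move=> i _; rewrite diff rnorm0.
  rewrite big1_eq mulr0 => hle.
  have h0 : forall j, rnorm (G y j - Yx j) = 0.
    move=> j; apply/eqP; move: hle; rewrite le_eqVlt => /orP[/eqP|]; last first.
      by rewrite ltNge sumr_ge0 // => j0 _; exact: rnorm_ge0.
    move/eqP; rewrite psumr_eq0 => [/allP h|j0 _]; last exact: rnorm_ge0.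
    by apply: h; rewrite mem_index_enum.
  rewrite -[RHS]ex; apply: boolp.functional_extensionality_dep => j.
  by have := rnorm_eq0 _ (h0 j); move/eqP; rewrite subr_eq0 => /eqP ->.
- exists ((\sum_(j < n) Mj j) * `|M|) => z.
  rewrite /prodnorm.
  apply: (le_trans (y := \sum_(j < n) Mj j * rnorm (G z j))).
    by apply: ler_sum => j _; case: (hMj j) => _; apply.
  apply: (le_trans (y := (\sum_(j < n) Mj j) * \sum_(j < n) rnorm (G z j))).
    rewrite mulr_sumr; apply: ler_sum => j _; apply: ler_wpM2r.
      exact: rnorm_ge0.
    by rewrite (bigD1 j) //= lerDl sumr_ge0 // => i _; case: (hMj i).
  rewrite -mulrA; apply: ler_wpM2l; first by apply: sumr_ge0 => i _; case: (hMj i).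
  apply: le_trans (hM (G z)) _.
  rewrite (eq_bigr (fun i => rnorm (z i))); last by move=> i _; rewrite hG.
  by apply: ler_wpM2r; [apply: sumr_ge0 => i _; exact: rnorm_ge0 | exact: ler_norm].
Qed.


Definition kb i j : R := if i == j then 0 else kk i j.

Lemma kb_spec i j : 0 <= kb i j /\ forall u, rnorm (KK i j u) <= kb i j * rnorm u.
Proof.
rewrite /kb; case: eqP => [->|_]; last by case: (kk_spec i j).
by split => // u; rewrite KK_diag rnorm0 mul0r.
Qed.

Definition rr j : R := \sum_(i < n | i != j) kk i j.

Lemma colsumE j : colsum _ _ _ A Dom j l = (rr j)%:E.
Proof.
rewrite /colsum /rr -sumEFin; apply: eq_bigr => i ij.
by rewrite -/(rs j) -KK_off //; case: (kk_spec i j).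
Qed.

Lemma rr_kb j : rr j = \sum_(i < n) kb i j.
Proof.
rewrite /rr [in RHS](bigD1 j) //= /kb eqxx add0r; apply: eq_bigr => i ij.
by rewrite (negbTE ij).
Qed.

Lemma rr_ge0 j : 0 <= rr j.
Proof. by apply: sumr_ge0 => i _; case: (kk_spec i j). Qed.

Lemma cass_good (i0 : 'I_n) :
  (forall i j, i != j -> rr i * rr j < 1) -> goodK KK.
Proof.
move=> hc.
have [p hp] := argmax _ i0 rr.
have rj1 j : j != p -> rr j < 1.
  move=> jp; have h := hc _ _ jp.
  have h2 : rr j * rr j <= rr j * rr p by rewrite ler_wpM2l ?rr_ge0.
  have := rr_ge0 j; nra.
have [a [a1 ap aj]] : exists a, [/\ 1 <= a, rr p < a & forall j, j != p -> a * rr j < 1].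
  have [rp1|rp1] := ltP (rr p) 1.
    exists 1; split => // j jp; rewrite mul1r; exact: rj1.
  have [T T1 hT] := @fin_sup _ (fun j => j != p) (fun j => rr j * rr p) 1 (fun j jp => hc _ _ jp).
  pose T' := Num.max T 0.
  have T'1 : T' < 1 by rewrite gt_max T1 ltr01.
  have T'0 : 0 <= T' by rewrite le_max lexx orbT.
  have hT' j : j != p -> rr j * rr p <= T' by move=> jp; rewrite le_max hT.
  exists (rr p * 2 / (1 + T')); split.
  - rewrite ler_pdivlMr ?ltr_wpDr // mul1r; nra.
  - rewrite ltr_pdivlMr ?ltr_wpDr //; nra.
  - move=> j jp; have := hT' j jp; have := rr_ge0 j.
    rewrite mulrAC ltr_pdivrMr ?ltr_wpDr // mul1r; nra.
pose w i : R := if i == p then a else 1.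
apply: (@core_good' _ _ KK kb w).
- exact: KKD.
- by move=> i j u; case: (kb_spec i j) => _; apply.
- by move=> i j; case: (kb_spec i j).
- by move=> i; rewrite /w; case: eqP => // _; apply: lt_le_trans a1.
move=> j.
have [->|jp] := eqVneq j p.
  rewrite /w eqxx; apply: le_lt_trans ap.
  rewrite rr_kb; apply: ler_sum => i _; case: eqP => [->|_]; last by rewrite mul1r.
  by rewrite /kb eqxx !mulr0.
rewrite /w (negbTE jp); apply: le_lt_trans (aj j jp).
rewrite rr_kb mulr_sumr; apply: ler_sum => i _.
have kb0 : 0 <= kb i j by case: (kb_spec i j).
by case: eqP => _ //; rewrite ler_wpM2r // a1.
Qed.

Section Star.
Variable c0 : 'I_n.

Definition NN : forall i j : 'I_n, X j -> X i :=
  fun i j u => if j == c0 then 0 else KK i j u + KK i c0 (KK c0 j u).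

Definition pp i j : R := fine (opnorm (fun u : X j => KK i c0 (KK c0 j u))).

Lemma pp_spec i j :
  [/\ opnorm (fun u : X j => KK i c0 (KK c0 j u)) = (pp i j)%:E, 0 <= pp i j
    & forall u, rnorm (KK i c0 (KK c0 j u)) <= pp i j * rnorm u].
Proof.
have [_ h1 h1b] := kk_spec i c0; have [_ h2 h2b] := kk_spec c0 j.
have B0 : 0 <= kk i c0 * kk c0 j by rewrite mulr_ge0.
have hb : forall u, rnorm (KK i c0 (KK c0 j u)) <= kk i c0 * kk c0 j * rnorm u.
  move=> u; apply: le_trans (h1b _) _; rewrite -mulrA ler_wpM2l //.
have hz : forall (a : C) u, KK i c0 (KK c0 j (a *: u)) = a *: KK i c0 (KK c0 j u).
  by move=> a u; rewrite !KKZ.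
by case: (opnorm_bdd _ _ _ _ B0 hz hb).
Qed.

Definition nb i j : R := if j == c0 then 0 else kb i j + pp i j.

Lemma NND i j u v : NN i j (u + v) = NN i j u + NN i j v.
Proof.
rewrite /NN; case: eqP => _; first by rewrite addr0.
by rewrite !KKD addrACA.
Qed.

Lemma NNb i j : 0 <= nb i j /\ forall u, rnorm (NN i j u) <= nb i j * rnorm u.
Proof.
rewrite /NN /nb; case: eqP => _; first by split => // u; rewrite rnorm0 mul0r.
have [kb0 kbb] := kb_spec i j; have [_ pp0 ppb] := pp_spec i j.
split; first by rewrite addr_ge0.
move=> u; apply: le_trans (rnormD _ _) _; rewrite mulrDl; exact: lerD.
Qed.

Lemma NN_id Y i : IK NN Y i = IK KK Y i + KK i c0 (IK KK Y c0).
Proof.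
have e2 : \sum_(j < n) NN i j (Y j) = \sum_(j < n | j != c0) (KK i j (Y j) + KK i c0 (KK c0 j (Y j))).
  rewrite (bigD1 c0) //= {1}/NN eqxx add0r; apply: eq_bigr => j jc.
  by rewrite /NN (negbTE jc).
have e1 : \sum_(j < n) (KK i j (Y j) + KK i c0 (KK c0 j (Y j))) =
   KK i c0 (Y c0) + \sum_(j < n | j != c0) (KK i j (Y j) + KK i c0 (KK c0 j (Y j))).
  by rewrite (bigD1 c0) //= KK_diag (fadd0 _ (KKD i c0)) addr0.
have e3 : \sum_(j < n) NN i j (Y j) =
   \sum_(j < n) KK i j (Y j) + \sum_(j < n) KK i c0 (KK c0 j (Y j)) - KK i c0 (Y c0).
  by rewrite e2 -big_split /= e1 addrC addKr.
rewrite /IK e3 (faddB _ (KKD i c0)) (fadd_sum _ (KKD i c0)).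
set a := Y i; set b := \sum_(j < n) KK i j (Y j); set dd := KK i c0 (Y c0).
set e := \sum_(j < n) KK i c0 (KK c0 j (Y j)).
exact: zmodAC2.
Qed.

Lemma good_transfer : goodK NN -> goodK KK.
Proof.
move=> [Ssol [M hM]]; split.
  move=> z; pose z' i := z i + KK i c0 (z c0).
  have [Y hY] := Ssol z'; exists Y.
  have hc : IK KK Y c0 = z c0.
    by have := hY c0; rewrite NN_id /z' !KK_diag !addr0.
  move=> i; have := hY i; rewrite NN_id /z' hc; exact: addIr.
exists (`|M| * (1 + \sum_(i < n) kb i c0)) => Y.
have kbc0 : 0 <= \sum_(i < n) kb i c0 by apply: sumr_ge0 => i _; case: (kb_spec i c0).
apply: le_trans (hM Y) _.
set u := IK KK Y.
have Su0 : 0 <= \sum_(i < n) rnorm (u i) by apply: sumr_ge0 => i _; exact: rnorm_ge0.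
have h1 : \sum_(i < n) rnorm (IK NN Y i) <= (1 + \sum_(i < n) kb i c0) * \sum_(i < n) rnorm (u i).
  apply: (le_trans (y := \sum_(i < n) (rnorm (u i) + kb i c0 * rnorm (u c0)))).
    apply: ler_sum => i _; rewrite NN_id; apply: le_trans (rnormD _ _) _.
    by rewrite lerD2l; case: (kb_spec i c0) => _; apply.
  rewrite big_split /= -mulr_suml mulrDl mul1r lerD2l ler_wpM2l //.
  by rewrite (bigD1 c0) //= lerDl; apply: sumr_ge0 => i _; exact: rnorm_ge0.
have S0 : 0 <= \sum_(i < n) rnorm (IK NN Y i) by apply: sumr_ge0 => i _; exact: rnorm_ge0.
apply: le_trans (ler_wpM2r S0 (ler_norm M)) _.
by rewrite -mulrA ler_wpM2l.
Qed.


Definition RS j : R := \sum_(i < n | i != c0) (pp i j + kb i j).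

Lemma RstarE j : c0 != j -> Rstar _ _ _ A Dom c0 j l = (RS j)%:E.
Proof.
move=> cj; rewrite /Rstar /RS -sumEFin; apply: eq_bigr => i ic.
rewrite EFinD; congr (_ + _)%E.
  have -> : (A i c0 \o res _ _ _ A Dom c0 l \o A c0 j \o res _ _ _ A Dom j l) =
            (fun u : X j => KK i c0 (KK c0 j u)).
    by apply: boolp.funext => u /=; rewrite /KK (negbTE ic) (negbTE cj).
  by case: (pp_spec i j).
rewrite /kb; case: eqP => [_|/eqP ij] //.
by rewrite -/(rs j) -KK_off //; case: (kk_spec i j).
Qed.

Lemma RS_ge0 j : 0 <= RS j.
Proof.
apply: sumr_ge0 => i _; have [_ h _] := pp_spec i j; have [h' _] := kb_spec i j.
exact: addr_ge0.
Qed.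

Lemma star_good : (forall j, j != c0 -> RS j < 1) -> goodK KK.
Proof.
move=> hR; apply: good_transfer.
have [T T1 hT] := @fin_sup _ (fun j => j != c0) RS 1 hR.
pose Sk := \sum_(j < n) nb c0 j.
have nb0 i j : 0 <= nb i j by case: (NNb i j).
have Sk0 : 0 <= Sk by apply: sumr_ge0.
pose eps := (1 - T) / (1 + Sk).
have eps0 : 0 < eps by rewrite divr_gt0 ?subr_gt0 // ltr_wpDr.
pose w i : R := if i == c0 then eps else 1.
apply: (@core_good' _ _ NN nb w).
- exact: NND.
- by move=> i j u; case: (NNb i j) => _; apply.
- exact: nb0.
- by move=> i; rewrite /w; case: eqP.
move=> j; have [->|jc] := eqVneq j c0.
  rewrite /w eqxx big1 // => i _; by rewrite /nb eqxx mulr0.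
rewrite /w (negbTE jc) (bigD1 c0) //= eqxx.
have -> : \sum_(i < n | i != c0) (if i == c0 then eps else 1) * nb i j = RS j.
  rewrite /RS; apply: eq_bigr => i ic; rewrite (negbTE ic) mul1r /nb (negbTE jc).
  exact: addrC.
have h1 : nb c0 j <= Sk by rewrite /Sk (bigD1 j) //= lerDl sumr_ge0.
have h2 : eps * nb c0 j < 1 - T.
  apply: (le_lt_trans (y := eps * Sk)); first by rewrite ler_wpM2l // ltW.
  rewrite /eps mulrAC ltr_pdivrMr ?ltr_wpDr // mulrDr mulr1 ltrDr.
  by rewrite subr_gt0.
have := hT j jc; lra.
Qed.
End Star.

Lemma main_cass (i0 : 'I_n) :
  (forall i j, i != j -> ~ (1 <= colsum _ _ _ A Dom i l * colsum _ _ _ A Dom j l)%E) ->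
  ~ spec_mat A Dom l.
Proof.
move=> h; apply: final; apply: (cass_good i0) => i j ij.
rewrite ltNge; apply/negP => h1; apply: (h i j ij).
by rewrite !colsumE -EFinM lee_fin.
Qed.

Lemma main_star (c0 : 'I_n) :
  (forall j, j != c0 -> ~ (1 <= Rstar _ _ _ A Dom c0 j l)%E) -> ~ spec_mat A Dom l.
Proof.
move=> h; apply: final; apply: (star_good c0) => j jc.
rewrite ltNge; apply/negP => h1; apply: (h j jc).
by rewrite RstarE ?lee_fin // eq_sym.
Qed.
End Main.
End S.

Theorem theorem5p6 (R : realType) (n : nat)
  (X : 'I_n -> completeNormedModType R[i])
  (A : forall i j : 'I_n, X j -> X i) (Dom : forall i j : 'I_n, set (X j)) :
  (2 <= n)%N ->
  (forall i j, linear_on (Dom i j) (A i j)) ->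
  (forall i, closed_op (Dom i i) (A i i)) ->
  (forall i j, i != j -> Dom j j `<=` Dom i j) ->
  (exists c d : 'I_n -> 'I_n -> R,
     (forall i j, i != j ->
        [/\ 0 <= c i j, 0 <= d i j &
          forall x, Dom j j x ->
            rnorm (A i j x) <= c i j * rnorm (A j j x) + d i j * rnorm x])
     /\ (forall j, \sum_(i < n | i != j) c i j < 1)) ->
  spec_mat A Dom `<=` cassini_union A Dom /\
  spec_mat A Dom `<=` \bigcap_(k in [set: 'I_n]) Sstar A Dom k.
Proof.
move=> n2 lin _ dsub [c [d [relb _]]].
have o0 : (0 < n)%N by apply: leq_trans n2.
have o1 : (1 < n)%N by [].
pose i0 := Ordinal o0; pose i1 := Ordinal o1.
have other : forall i : 'I_n, exists j, j != i.
  move=> i; case: (eqVneq i i0) => [->|ne]; last by exists i0; rewrite eq_sym.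
  by exists i1; apply/eqP => /(congr1 val).
split.
- move=> l hl; case: (pselect (cassini_union A Dom l)) => // hc; exfalso.
  have nsp : forall i, ~ specd _ _ _ A Dom i l.
    move=> i hi; apply: hc; have [j ji] := other i.
    case: (ltngtP i j) => [ij|ij|e].
    + by exists i, j; split => //; left; left.
    + by exists j, i; split => //; left; right.
    + by move: ji; rewrite (val_inj e) eqxx.
  apply: (main_cass R A Dom c d l lin dsub relb nsp i0 _ hl).
  move=> i j ij h; apply: hc; case: (ltngtP i j) => [lt|gt|e].
  + by exists i, j; split => //; right; split; [apply: nsp | split; [apply: nsp | exact: h]].
  + exists j, i; split => //; right; split; [apply: nsp | split; [apply: nsp |]].
    by rewrite muleC.
  + by move: ij; rewrite (val_inj e) eqxx.
- move=> l hl k _; case: (pselect (Sstar A Dom k l)) => // hs; exfalso.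
  have nsp : forall i, ~ specd _ _ _ A Dom i l.
    move=> i hi; apply: hs; case: (eqVneq i k) => [e|ik].
    + have [j jk] := other k; exists j; split => //; left; left; by rewrite -e.
    + by exists i; split => //; left; right.
  apply: (main_star R A Dom c d l lin dsub relb nsp k _ hl).
  move=> j jk h; apply: hs; exists j; split => //.
  by right; split; [apply: nsp | split; [apply: nsp | exact: h]].
Qed.
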